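(* Let $n\ge 1$. The map $\phi$ described below is a well-defined bijection from $\mathcal{I}_n(\underline{000})$ onto the disjoint union $\overline{\mathcal{D}}_n\sqcup\overline{\mathcal{D}}_{n-1}$. In particular, $|\mathcal{I}_n(\underline{000})|=\overline{d}_n+\overline{d}_{n-1}=(n!-d_n)+((n-1)!-d_{n-1})$. Definition of $\phi$. Let $e=e_1e_2\dots e_n\in\mathcal{I}_n(\underline{000})$. First define a word $w=w_2\dots w_n$ by, for $2\le k\le n$: $w_k=R$ if $e_k=e_{k-1}$; $w_k=e_k$ if $e_k>e_{k-1}$; $w_k=e_k+1$ if $e_k<e_{k-1}$. (Here $R$ is a new symbol; use the convention that $w_1\neq R$.) Next define permutations $\sigma_1,\dots,\sigma_n$: set $\sigma_1=1\in\overline{\mathcal{D}}_1$. For $k=2,\dots,n$: if $w_k=R$, set $\sigma_k=\sigma_{k-1}$ (regarded as an element of $\overline{\mathcal{D}}_{k-1}$). If $w_k\neq R$, then $$\sigma_k=\begin{cases}(w_k,k)\,\sigma_{k-1} & \text{if } w_{k-1}\neq R \text{ and } \sigma_{k-1}\in\overline{\mathcal{D}}_{k-1}\text{ has a fixed point different from } w_k,\\ (w_k,k-1)\,\sigma_{k-1} & \text{otherwise,}\end{cases}$$ where on the right-hand side $\sigma_{k-1}$ is viewed as an element of $\mathfrak{S}_k$ (by adding fixed points), and $\sigma_k$ is regarded as an element of $\overline{\mathcal{D}}_k$. Finally $\phi(e)=\sigma_n$, regarded as an element of $\overline{\mathcal{D}}_n$ if $w_n\neq R$ and of $\overline{\mathcal{D}}_{n-1}$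 if $w_n=R$.
   Context: $\mathfrak{S}_n$ is the set of permutations of $[n]=\{1,\dots,n\}$; $\mathfrak{S}_{m}$ is viewed as the subset of $\mathfrak{S}_n$ ($m\le n$) of permutations fixing $m+1,\dots,n$. A fixed point of $\pi$ is $i$ with $\pi(i)=i$. A derangement is a permutation with no fixed points; $d_n$ is the number of derangements in $\mathfrak{S}_n$ (with $d_0=1$). $\overline{\mathcal{D}}_n$ is the set of permutations in $\mathfrak{S}_n$ having at least one fixed point, and $\overline{d}_n=|\overline{\mathcal{D}}_n|=n!-d_n$ (so $\overline{\mathcal{D}}_0=\emptyset$). An inversion sequence of length $n$ is an integer sequence $e_1\dots e_n$ with $0\le e_i<i$ for all $i$; $\mathcal{I}_n(\underline{000})$ is the set of those with no $i\in[n-2]$ such that $e_i=e_{i+1}=e_{i+2}$. For $1\le a,b\le n$, $(a,b)$ denotes the permutation of $[n]$ exchanging $a$ and $b$ (the identity if $a=b$), and $(a,b)\sigma$ is the composition, i.e. the one-line notation of $\sigma$ with the values $a$ and $b$ swapped. *)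

(* Defs.v *)
From mathcomp Require Import all_boot all_order all_fingroup.
Set Implicit Arguments.
Unset Strict Implicit.
Unset Printing Implicit Defensive.

Section Defs.
Variable n : nat.

(* An inversion sequence of length n is stored as e : n.-tuple 'I_n;
   1-based value e_k is  ev e k = nth 0 (map val e) k.-1. *)
Definition ev (e : n.-tuple 'I_n) (k : nat) : nat := nth 0 (map val e) k.-1.

Definition I000 : {set n.-tuple 'I_n} :=
  [set e | [forall k : 'I_n, ev e k.+1 < k.+1] &&
           [forall k : 'I_n, (k.+3 <= n) ==>
              ~~ ((ev e k.+1 == ev e k.+2) && (ev e k.+2 == ev e k.+3))]].

(* The word w: None encodes the symbol R; convention w_1 <> R. *)
Definition w (e : n.-tuple 'I_n) (k : nat) : option nat :=
  if k <= 1 then Some 0 else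
  let a := ev e k in let b := ev e k.-1 in
  if a == b then None else if b < a then Some a else Some a.+1.

Definition tr (a b : nat) : {perm 'I_n} :=
  match @insub _ (fun i => i < n) 'I_n a.-1, @insub _ (fun i => i < n) 'I_n b.-1 with
  | Some x, Some y => tperm x y
  | _, _ => 1%g
  end.

Definition hasfix (s : {perm 'I_n}) (m a : nat) : bool :=
  [exists i : 'I_n, [&& i < m, s i == i & i.+1 != a]].

(* sigma e k = sigma_k, viewed in S_n (fixing k+1..n).
   (a,b) sigma  (apply sigma, then swap) is  sigma * tr a b  in MathComp. *)
Fixpoint sigma (e : n.-tuple 'I_n) (k : nat) : {perm 'I_n} :=
  match k with
  | 0 | 1 => 1%g
  | k'.+1 =>
      let s := sigma e k' in
      match w e k with
      | None => s
      | Some a =>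
          if (w e k' != None) && hasfix s k' a then (s * tr a k)%g else (s * tr a k')%g
      end
  end.

(* phi e = (true, s) encodes s in Dbar_n, (false, s) encodes s in Dbar_{n-1}
   (viewed inside S_n as a permutation fixing n). *)
Definition phi (e : n.-tuple 'I_n) : bool * {perm 'I_n} :=
  (w e n != None, sigma e n).

Definition Dbar_union : {set bool * {perm 'I_n}} :=
  [set p : bool * {perm 'I_n} | if p.1 then [exists i : 'I_n, p.2 i == i]
           else [forall i : 'I_n, (n.-1 <= i) ==> (p.2 i == i)] &&
                [exists i : 'I_n, (i < n.-1) && (p.2 i == i)]].

End Defs.

Definition d (m : nat) : nat := #|[set s : {perm 'I_m} | [forall i, s i != i]]|.

(* Main.v *)
Require Import Defs.
From mathcomp Require Import all_boot all_order all_fingroup.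
From mathcomp Require Import zify.
Set Implicit Arguments.
Unset Strict Implicit.
Unset Printing Implicit Defensive.

Section Proof.
Variable n : nat.
Hypothesis hn : 0 < n.

Definition sv (s : {perm 'I_n}) (i : nat) : nat :=
  if @insub _ (fun i => i < n) 'I_n i is Some o then val (s o) else i.

Lemma sv_ord s (o : 'I_n) : sv s o = s o.
Proof. by rewrite /sv valK. Qed.

Lemma sv_out s i : n <= i -> sv s i = i.
Proof. by move=> h; rewrite /sv insubF //; apply/negbTE; rewrite -leqNgt. Qed.

Lemma sv_lt s i : i < n -> sv s i < n.
Proof. by move=> h; rewrite -[i]/(val (Ordinal h)) sv_ord. Qed.

Lemma sv_inj s : injective (sv s).
Proof.
move=> i j.
case: (ltnP i n) => hi; case: (ltnP j n) => hj.
- rewrite -[i]/(val (Ordinal hi)) -[j]/(val (Ordinal hj)) !sv_ord.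
  by move/val_inj/perm_inj => ->.
- rewrite (sv_out _ hj) => e. have := sv_lt s hi. lia.
- rewrite (sv_out _ hi) => e. have := sv_lt s hj. lia.
- by rewrite (sv_out _ hi) (sv_out _ hj).
Qed.

Lemma sv_eq s s' : (forall i, i < n -> sv s i = sv s' i) -> s = s'.
Proof.
move=> h; apply/permP => o; apply: val_inj; have := h o (ltn_ord o); by rewrite !sv_ord.
Qed.

Lemma sv1 i : sv 1 i = i.
Proof.
case: (ltnP i n) => hi; last exact: sv_out.
by rewrite -[i]/(val (Ordinal hi)) sv_ord perm1.
Qed.

Definition swapn (x y z : nat) : nat := if z == x then y else if z == y then x else z.

Lemma tr_sv s a b i : 0 < a <= n -> 0 < b <= n ->
  sv (s * tr n a b) i = swapn a.-1 b.-1 (sv s i).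
Proof.
move=> /andP[a0 an] /andP[b0 bn].
have ha : a.-1 < n by lia.
have hb : b.-1 < n by lia.
rewrite /tr (insubT (fun i => i < n) ha) (insubT (fun i => i < n) hb).
case: (ltnP i n) => hi; last first.
  rewrite !sv_out // /swapn; case: eqP => [?|_]; first lia.
  case: eqP => //; lia.
rewrite -[i]/(val (Ordinal hi)) !sv_ord permM /swapn.
case: tpermP => [->|->|h1 h2] /=.
- by rewrite eqxx.
- by case: eqP => [->|_]; rewrite ?eqxx.
- rewrite ifN; last by apply/eqP=> h; apply: h1; apply: val_inj.
  by rewrite ifN //; apply/eqP=> h; apply: h2; apply: val_inj.
Qed.

Lemma tr_invol s a b : (s * tr n a b * tr n a b = s)%g.
Proof.
rewrite /tr; case: (@insub _ (fun i => i < n) 'I_n a.-1) => [x|];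
  case: (@insub _ (fun i => i < n) 'I_n b.-1) => [y|];
  rewrite ?mulg1 //; by rewrite -mulgA tperm2 mulg1.
Qed.


Ltac sw := rewrite /swapn; repeat (case: eqP => ?); lia.

Definition fixes_from s k := forall i, k <= i -> sv s i = i.
Definition hasfp s k := exists i, i < k /\ sv s i = i.
Definition st k (p : bool * {perm 'I_n}) : Prop :=
  if p.1 then fixes_from p.2 k /\ hasfp p.2 k
  else fixes_from p.2 k.-1 /\ hasfp p.2 k.-1.
Definition valid K (p : bool * {perm 'I_n}) (x : option nat) : Prop :=
  match x with None => p.1 = true | Some a => 0 < a < K end.
Definition F K (p : bool * {perm 'I_n}) (x : option nat) : {perm 'I_n} :=
  match x with
  | None => p.2
  | Some a => if p.1 && hasfix p.2 K.-1 a then (p.2 * tr n a K)%g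
              else (p.2 * tr n a K.-1)%g
  end.

Lemma hasfixP s m a : m <= n ->
  reflect (exists i, [/\ i < m, sv s i = i & i.+1 != a]) (hasfix s m a).
Proof.
move=> mn; apply: (iffP existsP) => [[i /and3P[h1 /eqP h2 h3]]|[i [h1 h2 h3]]].
  by exists i; split => //; rewrite sv_ord h2.
have hi : i < n by lia.
exists (Ordinal hi); apply/and3P; split => //.
by apply/eqP/val_inj; rewrite /= -sv_ord.
Qed.

Lemma st_fix k p : st k p -> fixes_from p.2 k.
Proof.
case: p => [[] s] /= [h _] // i hi; apply: h; lia.
Qed.

Lemma step_into K p x : 1 < K <= n -> st K.-1 p -> valid K p x ->
  st K (x != None, F K p x).
Proof.
move=> hK; case: p => b s; case: x => [a|] /=; last first.
  by move=> hs hb; move: hs; rewrite /st /= hb.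
move=> hs va; have hf := st_fix hs; rewrite /= in hf.
have hKn : K.-1 <= n by lia.
case: ifP => hb /=.
- case/andP: hb => hb /(hasfixP _ _ hKn) [j [j1 j2 j3]].
  split.
    move=> i hi; rewrite tr_sv; [|lia|lia]; rewrite hf; [sw|lia].
  exists j; split; first lia.
  rewrite tr_sv; [|lia|lia]; rewrite j2; sw.
- split.
    move=> i hi; rewrite tr_sv; [|lia|lia]; rewrite hf; [sw|lia].
  exists K.-1; split; first lia.
  rewrite tr_sv; [|lia|lia]; rewrite hf; [sw|lia].
Qed.

Definition Q (t : nat -> nat) M :=
  (exists j, j < M /\ t j = j) \/ (t M <> M /\ t (t M) = M).

Lemma kl_false (f t : nat -> nat) A M : injective f -> A <= M ->
  (forall i, M <= i -> f i = i) -> (exists j, j < M /\ f j = j) ->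
  (forall z, t z = swapn A M (f z)) -> t M = A /\ Q t M.
Proof.
move=> fi AM ff [j [j1 j2]] ht.
have tM : t M = A by rewrite ht ff //; sw.
split => //.
case: (eqVneq j A) => [jA|jA].
- right; rewrite tM; split; first lia.
  by rewrite ht -jA j2; sw.
- left; exists j; split => //; rewrite ht j2; move/eqP: jA; sw.
Qed.

Lemma kl_true (f t : nat -> nat) A M : injective f -> A <= M ->
  (forall i, M < i -> f i = i) -> f A = A ->
  (forall j, j <= M -> f j = j -> j = A) ->
  (forall z, t z = swapn A M (f z)) -> t A = M /\ ~ Q t M.
Proof.
move=> fi AM ff fA fu ht.
split; first by rewrite ht fA; sw.
case=> [[j [j1 j2]]|[h1 h2]].
- move: j2; rewrite ht.
  case: (eqVneq (f j) A) => [e|ne].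
    have ejA : j = A by apply: fi; rewrite e fA.
    rewrite e; sw.
  case: (eqVneq (f j) M) => [e|ne2].
    rewrite e => h.
    have [jA|] : j = A \/ (M = A /\ j = M) by move: h; sw.
      by move: e j1; rewrite jA fA; lia.
    lia.
  move=> h.
  have fj : f j = j by move: h; move/eqP: ne; move/eqP: ne2; sw.
  have ejA := fu j (ltnW j1) fj.
  by move: ne; rewrite fj ejA eqxx.
- case: (eqVneq A M) => [AeM|AnM].
    apply: h1; rewrite ht -AeM fA; sw.
  have fM1 : f M <> M by move=> e; have := fu M (leqnn M) e; move/eqP: AnM; lia.
  have fM2 : f M <> A.
    move=> e; have MA : M = A by apply: fi; rewrite e fA.
    by move: AnM; rewrite MA eqxx.
  have tM : t M = f M by rewrite ht; move: fM1 fM2; sw.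
  move: h2; rewrite tM ht.
  case: (eqVneq (f (f M)) A) => [e|ne].
    by have : f M = A by apply: fi; rewrite e fA.
  case: (eqVneq (f (f M)) M) => [e|ne2].
    rewrite e; move/eqP: AnM; sw.
  move: ne ne2 => /eqP ne /eqP ne2; rewrite /swapn.
  rewrite ifN; last by apply/eqP.
  rewrite ifN; last by apply/eqP.
  done.
Qed.

Lemma F_K1 K b s a : 1 < K <= n -> st K.-1 (b, s) -> 0 < a < K ->
  sv (F K (b, s) (Some a)) K.-1 = if b && hasfix s K.-1 a then a.-1 else K.-1.
Proof.
move=> hK hs va; have hf := st_fix hs; rewrite /= in hf.
rewrite /F /=; case: ifP => _; rewrite tr_sv; try lia; rewrite hf; try lia; sw.
Qed.

Lemma branch2 K b s a : 1 < K <= n -> st K.-1 (b, s) -> 0 < a < K ->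
  (b && hasfix s K.-1 a) = false ->
  forall t : nat -> nat, (forall z, t z = sv (s * tr n a K.-1) z) ->
  (b = false -> t K.-2 = a.-1 /\ Q t K.-2) /\
  (b = true -> t a.-1 = K.-2 /\ ~ Q t K.-2).
Proof.
move=> hK hs va hb t ht.
have ht' : forall z, t z = swapn a.-1 K.-2 (sv s z).
  by move=> z; rewrite ht tr_sv //; lia.
split=> eb; subst b.
- case: hs => [ff fp]; apply: (kl_false (@sv_inj s) _ _ _ ht'); first lia.
    by move=> i hi; apply: ff; lia.
  done.
- case: hs => [ff [j [j1 j2]]].
  have hK1 : K.-1 <= n by lia.
  have fu : forall j, j <= K.-2 -> sv s j = j -> j = a.-1.
    move=> i hi fi.
    have : ~~ hasfix s K.-1 a by move: hb; rewrite /= => ->.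
    move/(hasfixP _ _ hK1) => h.
    case: (eqVneq i.+1 a) => [<-//|ne].
    by case: h; exists i; split => //; lia.
  have fA : sv s a.-1 = a.-1 by have := fu j ltac:(lia) j2 => e; rewrite -e.
  apply: (kl_true (@sv_inj s) _ _ fA fu ht'); first lia.
  by move=> i hi; apply: ff; lia.
Qed.

Lemma step_inj K p p' x x' : 1 < K <= n -> st K.-1 p -> st K.-1 p' ->
  valid K p x -> valid K p' x' ->
  (x != None, F K p x) = (x' != None, F K p' x') -> p = p' /\ x = x'.
Proof.
move=> hK; case: p => b s; case: p' => b' s'.
case: x => [a|]; case: x' => [a'|] //=; last first.
  by move=> _ _ -> -> [->].
move=> hs hs' va va' [e].
have k1 := F_K1 hK hs va; have k2 := F_K1 hK hs' va'.
rewrite /F /= e in k1.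
move: e k1 k2; rewrite /F /=.
case: ifP => h1; case: ifP => h2 e k1 k2; try lia.
- have aa : a = a' by lia.
  subst a'; have ss := mulIg _ _ _ e; subst s'.
  by move: h1 h2 => /andP[-> _] /andP[-> _].
- set t := sv (s * tr n a K.-1).
  have ht : forall z, t z = sv (s * tr n a K.-1) z by [].
  have ht2 : forall z, t z = sv (s' * tr n a' K.-1) z by move=> z; rewrite ht e.
  have [B1 B2] := branch2 hK hs va h1 ht.
  have [B1' B2'] := branch2 hK hs' va' h2 ht2.
  have [bb aa] : b = b' /\ a = a'.
    case: b B1 B2 {h1 hs}; case: b' B1' B2' {h2 hs'} => B1' B2' B1 B2.
    + have [u1 _] := B2 erefl; have [u2 _] := B2' erefl.
      have h : sv (s * tr n a K.-1) a.-1 = sv (s * tr n a K.-1) a'.-1.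
        by rewrite -!ht u1 u2.
      split => //; have := sv_inj h; lia.
    + by have [_ u1] := B2 erefl; have [_ u2] := B1' erefl.
    + by have [_ u1] := B1 erefl; have [_ u2] := B2' erefl.
    + have [u1 _] := B1 erefl; have [u2 _] := B1' erefl.
      split => //; lia.
  subst b' a'; have ss := mulIg _ _ _ e; by subst s'.
Qed.

Lemma maps_into s K i : fixes_from s K -> i < K -> sv s i < K.
Proof.
move=> hf hi; rewrite ltnNge; apply/negP => h.
have e : sv s (sv s i) = sv s i by apply: hf.
have := sv_inj e; lia.
Qed.

Lemma sv_surj s M : M < n -> exists i, sv s i = M.
Proof.
move=> hM; exists ((s^-1)%g (Ordinal hM)); by rewrite sv_ord permKV.
Qed.

Lemma pre1 K tau a : 1 < K <= n -> 0 < a < K ->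
  st K.-1 (true, (tau * tr n a K)%g) -> hasfix (tau * tr n a K) K.-1 a ->
  exists p x, [/\ st K.-1 p, valid K p x & (true, tau) = (x != None, F K p x)].
Proof.
move=> hK va hs hb; exists (true, (tau * tr n a K)%g), (Some a); split => //.
by rewrite /F /= hb tr_invol.
Qed.

Lemma pre2 K tau b a : 1 < K <= n -> 0 < a < K ->
  st K.-1 (b, (tau * tr n a K.-1)%g) ->
  (b && hasfix (tau * tr n a K.-1) K.-1 a) = false ->
  exists p x, [/\ st K.-1 p, valid K p x & (true, tau) = (x != None, F K p x)].
Proof.
move=> hK va hs hb; exists (b, (tau * tr n a K.-1)%g), (Some a); split => //.
by rewrite /F /= hb tr_invol.
Qed.

Lemma step_surj K q : 1 < K <= n -> st K q ->
  exists p x, [/\ st K.-1 p, valid K p x & q = (x != None, F K p x)].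
Proof.
move=> hK; case: q => [[] tau] /= [hf hp]; last first.
  by exists (true, tau), None; split.
move: hf hp; rewrite /fixes_from /hasfp /= => hf hp.
have hK1 : K.-1 <= n by lia.
set f := sv tau.
have fi : injective f := @sv_inj tau.
have hf' : forall i, K <= i -> f i = i := hf.
case: (eqVneq (f K.-1) K.-1) => [fK|fK]; last first.
  have hA : f K.-1 < K by apply: (maps_into hf); lia.
  have fK' : f K.-1 <> K.-1 by apply/eqP.
  case: hp => j [j1 j2]; rewrite -/f in j2.
  have jK : j <> K.-1 by move=> e; apply: fK'; rewrite -{2}e -j2 e.
  have jA : j <> f K.-1.
    move=> e; have : f j = f K.-1 by rewrite j2.
    by move/fi.
  have ht : forall z, sv (tau * tr n (f K.-1).+1 K) z = swapn (f K.-1) K.-1 (f z).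
    by move=> z; rewrite tr_sv; [by []|lia|lia].
  apply: (@pre1 K tau (f K.-1).+1) => //; first lia.
    split.
      move=> i hi; rewrite ht; case: (eqVneq i K.-1) => [->|ne]; first sw.
      rewrite (hf' i); [|lia]; move/eqP: ne; sw.
    exists j; split; first lia.
    rewrite ht j2; sw.
  apply/(hasfixP _ _ hK1); exists j; split; first lia.
    rewrite ht j2; sw.
  apply/eqP; lia.
have fK' : f K.-1 = K.-1 by [].
have hM : K.-2 < n by lia.
have ht : forall a, 0 < a < K -> forall z,
    sv (tau * tr n a K.-1) z = swapn a.-1 K.-2 (f z).
  by move=> a va z; rewrite tr_sv; [by []|lia|lia].
case: (boolP (has (fun j => f j == j) (iota 0 K.-2))) => [/hasP [j]|/hasPn hno].
- rewrite mem_iota add0n => /andP[_ j1] /eqP j2.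
  case: (eqVneq (f K.-2) K.-2) => [fM|fM].
  + have fM' : f K.-2 = K.-2 by [].
    apply: (@pre2 K tau false K.-1) => //; first lia.
    have ht' := ht K.-1 ltac:(lia).
    split.
      move=> i hi; rewrite ht'.
      case: (ltnP i K) => hi2.
        have [->|->] : i = K.-2 \/ i = K.-1 by lia.
          rewrite fM'; sw.
        rewrite fK'; sw.
      rewrite (hf' i); [sw|lia].
    exists j; split => //; rewrite ht' j2; sw.
  + have fM' : f K.-2 <> K.-2 by apply/eqP.
    have hA : f K.-2 < K by apply: (maps_into hf); lia.
    have AK : f K.-2 <> K.-1.
      by move=> e; rewrite -fK' in e; have := fi _ _ e; lia.
    have jA : j <> f K.-2.
      move=> e; have : f K.-2 = f j by rewrite j2.
      by move/fi => e2; lia.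
    have ht' := ht (f K.-2).+1 ltac:(lia).
    apply: (@pre2 K tau false (f K.-2).+1) => //; first lia.
    split.
      move=> i hi; rewrite ht'.
      case: (ltnP i K) => hi2.
        have [->|->] : i = K.-2 \/ i = K.-1 by lia.
          sw.
        rewrite fK'; sw.
      rewrite (hf' i); [sw|lia].
    exists j; split => //; rewrite ht' j2; sw.
- have hno' : forall j, j < K.-2 -> f j <> j.
    move=> j hj e; have := hno j; rewrite mem_iota add0n hj e eqxx.
    by move=> h; have := h erefl.
  case: (eqVneq (f K.-2) K.-2) => [fM|fM].
  + have fM' : f K.-2 = K.-2 by [].
    have ht' := ht K.-1 ltac:(lia).
    apply: (@pre2 K tau true K.-1) => //; first lia.
      split.
        move=> i hi; rewrite ht'.
        case: (ltnP i K) => hi2.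
          have -> : i = K.-1 by lia.
          rewrite fK'; sw.
        rewrite (hf' i); [sw|lia].
      exists K.-2; split; first lia.
      rewrite ht' fM'; sw.
    apply/negbTE/(hasfixP _ _ hK1) => -[i [i1 i2 i3]].
    move: i2; rewrite ht'.
    case: (ltnP i K.-2) => hi.
      have := hno' i hi. move: i3; sw.
    have ie : i = K.-2 by lia.
    move: i3; rewrite ie; lia.
  + have fM' : f K.-2 <> K.-2 by apply/eqP.
    have hA : f K.-2 < K by apply: (maps_into hf); lia.
    have AK : f K.-2 <> K.-1.
      by move=> e; rewrite -fK' in e; have := fi _ _ e; lia.
    case: (eqVneq (f (f K.-2)) K.-2) => [ffM|ffM].
    * have ffM' : f (f K.-2) = K.-2 by [].
      have ht' := ht (f K.-2).+1 ltac:(lia).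
      apply: (@pre2 K tau false (f K.-2).+1) => //; first lia.
      split.
        move=> i hi; rewrite ht'.
        case: (ltnP i K) => hi2.
          have [->|->] : i = K.-2 \/ i = K.-1 by lia.
            sw.
          rewrite fK'; sw.
        rewrite (hf' i); [sw|lia].
      exists (f K.-2); split; first lia.
      rewrite ht' /= ffM'; sw.
    * have ffM' : f (f K.-2) <> K.-2 by apply/eqP.
      have [A fA] := sv_surj tau hM.
      rewrite -/f in fA.
      have hA2 : A < K.
        rewrite ltnNge; apply/negP => h; have := hf' A h; lia.
      have AK2 : A <> K.-1 by move=> e; rewrite e fK' in fA; lia.
      have AM : A <> K.-2 by move=> e; rewrite e in fA; lia.
      have ht' := ht A.+1 ltac:(lia).
      apply: (@pre2 K tau true A.+1) => //; first lia.
        split.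
          move=> i hi; rewrite ht'.
          case: (ltnP i K) => hi2.
            have -> : i = K.-1 by lia.
            rewrite fK'; sw.
          rewrite (hf' i); [sw|lia].
        exists A; split; first lia.
        rewrite ht' /= fA; sw.
      apply/negbTE/(hasfixP _ _ hK1) => -[i [i1 i2 i3]].
      move: i2; rewrite ht' /=.
      case: (eqVneq (f i) A) => [e|ne].
        rewrite e => h.
        have iM : i = K.-2 by move: h; sw.
        by apply: ffM'; rewrite -{1}iM e fA.
      case: (eqVneq (f i) K.-2) => [e|ne2].
        have : f i = f A by rewrite e fA.
        move/fi => e2; lia.
      move=> h.
      have fii : f i = i by move: h; move/eqP: ne; move/eqP: ne2; sw.
      case: (ltnP i K.-2) => hi.
        by have := hno' i hi.
      have ie : i = K.-2 by lia.
      by rewrite ie in fii.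
Qed.

Implicit Types (e : n.-tuple 'I_n).
Definition Phi k (e : n.-tuple 'I_n) := (w e k != None, sigma e k).

Lemma sigma_S e k : 0 < k -> sigma e k.+1 = F k.+1 (Phi k e) (w e k.+1).
Proof. by case: k. Qed.

Lemma wE e k : 1 < k -> w e k =
  if ev e k == ev e k.-1 then None
  else if ev e k.-1 < ev e k then Some (ev e k) else Some (ev e k).+1.
Proof. by move=> hk; rewrite /w ifN // -ltnNge. Qed.

Lemma ev_tnth (e : n.-tuple 'I_n) (i : 'I_n) : ev e i.+1 = val (tnth e i).
Proof. by rewrite /ev /= (nth_map i) ?size_tuple // -tnth_nth. Qed.

Lemma tuple_ext (e e' : n.-tuple 'I_n) :
  (forall j, 0 < j <= n -> ev e j = ev e' j) -> e = e'.
Proof.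
move=> h; apply: val_inj; apply: (inj_map val_inj).
apply: (@eq_from_nth _ 0); first by rewrite !size_map !size_tuple.
rewrite size_map size_tuple => i hi.
have := h i.+1 ltac:(lia); by rewrite /ev.
Qed.

Lemma I000P (e : n.-tuple 'I_n) : e \in I000 n <->
  (forall j, 0 < j <= n -> ev e j < j) /\
  (forall j, 0 < j -> j.+2 <= n -> ~ (ev e j = ev e j.+1 /\ ev e j.+1 = ev e j.+2)).
Proof.
rewrite inE; split.
- move=> /andP[/forallP h1 /forallP h2]; split.
    move=> j hj; have hj' : j.-1 < n by lia.
    by have := h1 (Ordinal hj'); rewrite /= prednK //; lia.
  move=> j j0 jn [e1 e2]; have hj' : j.-1 < n by lia.
  have := h2 (Ordinal hj'); rewrite /= prednK // => /implyP h.
  by move: (h jn); rewrite e1 e2 !eqxx.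
- move=> [h1 h2]; apply/andP; split; apply/forallP => k.
    apply: h1; have := ltn_ord k; lia.
  apply/implyP => hk; apply/negP => /andP[/eqP e1 /eqP e2].
  exact: (h2 k.+1).
Qed.

Definition mk (f : nat -> nat) : n.-tuple 'I_n := [tuple insubd i (f i.+1) | i < n].

Lemma ev_mk f j : 0 < j <= n -> f j < n -> ev (mk f) j = f j.
Proof.
move=> hj hf; have hj' : j.-1 < n by lia.
rewrite -(prednK (_ : 0 < j)); last lia.
rewrite -[j.-1]/(val (Ordinal hj')) ev_tnth tnth_mktuple /= insubdK prednK //; lia.
Qed.

Lemma mk_I000 f : (forall j, 0 < j <= n -> f j < j) ->
  (forall j, 0 < j -> j.+2 <= n -> ~ (f j = f j.+1 /\ f j.+1 = f j.+2)) ->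
  mk f \in I000 n /\ forall j, 0 < j <= n -> ev (mk f) j = f j.
Proof.
move=> h1 h2.
have ev' : forall j, 0 < j <= n -> ev (mk f) j = f j.
  move=> j hj; apply: ev_mk => //; have := h1 j hj; lia.
split => //; apply/I000P; split.
  by move=> j hj; rewrite ev'; [exact: h1|].
move=> j j0 jn; rewrite !ev'; [exact: h2|lia|lia|lia].
Qed.

Lemma w_loc e (e' : n.-tuple 'I_n) k : (forall j, 0 < j <= k -> ev e j = ev e' j) -> w e k = w e' k.
Proof.
move=> h; case: (ltnP 1 k) => hk; last by rewrite /w !ifT.
rewrite !wE // !h //; lia.
Qed.

Lemma sigma_loc e (e' : n.-tuple 'I_n) k : (forall j, 0 < j <= k -> ev e j = ev e' j) ->
  sigma e k = sigma e' k.
Proof.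
elim: k => [|k IH] h //.
case: k IH h => [|k] IH h //.
rewrite !sigma_S // /Phi IH; last by move=> j hj; apply: h; lia.
rewrite (@w_loc e e' k.+1); last by move=> j hj; apply: h; lia.
by rewrite (@w_loc e e' k.+2).
Qed.

Lemma Phi_loc e (e' : n.-tuple 'I_n) k : (forall j, 0 < j <= k -> ev e j = ev e' j) ->
  Phi k e = Phi k e'.
Proof. by move=> h; rewrite /Phi (w_loc h) (sigma_loc h). Qed.

Lemma w_valid e k : e \in I000 n -> 1 < k <= n -> valid k (Phi k.-1 e) (w e k).
Proof.
move=> /I000P [h1 h2] hk.
have hk1 : ev e k.-1 < k.-1 by apply: h1; lia.
have hk2 : ev e k < k by apply: h1; lia.
rewrite wE; last lia.
case: eqP => [ek|ne] /=.
  case: (ltnP 2 k) => k2; last first.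
    by have -> : k.-1 = 1 by lia.
  rewrite wE; last lia.
  case: (eqVneq (ev e k.-1) (ev e k.-2)) => [e2|ne2] /=; last first.
    by case: ifP.
  have E1 : k.-2.+1 = k.-1 by lia.
  case: (h2 k.-2); [lia|lia|].
  rewrite E1 prednK; last lia.
  by split; [rewrite e2|rewrite ek].
case: ltnP => hl /=; lia.
Qed.

Lemma Phi1 e : Phi 1 e = (true, 1%g).
Proof. by []. Qed.

Lemma st1 : st 1 (true, 1%g).
Proof. split; first by move=> i _; apply: sv1. by exists 0; split; last apply: sv1. Qed.

Lemma PhiS e k : 0 < k -> Phi k.+1 e = (w e k.+1 != None, F k.+1 (Phi k e) (w e k.+1)).
Proof. by move=> hk; rewrite {1}/Phi sigma_S. Qed.

Lemma into e : e \in I000 n -> forall k, 0 < k <= n -> st k (Phi k e).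
Proof.
move=> he; elim=> [|k IH] hk //.
case: (posnP k) => [->|k0]; first by rewrite Phi1; exact: st1.
rewrite PhiS //.
have := @step_into k.+1 (Phi k e) (w e k.+1) ltac:(lia) (IH ltac:(lia)).
apply; apply: w_valid => //; lia.
Qed.

Lemma w_det e (e' : n.-tuple 'I_n) k : 1 < k -> ev e k.-1 = ev e' k.-1 ->
  w e k = w e' k -> ev e k = ev e' k.
Proof.
move=> hk h; rewrite !wE // h.
move: (ev e k) (ev e' k) (ev e' k.-1) => x y p.
case: (eqVneq x p) => [->|h1]; case: (eqVneq y p) => [->|h2] //=;
  case: (ltnP p x) => ?; case: (ltnP p y) => ? E. all: try discriminate. all: try (injection E; lia).
Qed.

Lemma inj_ev e (e' : n.-tuple 'I_n) : e \in I000 n -> e' \in I000 n ->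
  forall k, 0 < k <= n -> Phi k e = Phi k e' ->
  forall j, 0 < j <= k -> ev e j = ev e' j.
Proof.
move=> he he'; elim=> [|k IH] hk //.
case: (posnP k) => [k0|k0] hP j hj.
  subst k; have -> : j = 1 by lia.
  move/I000P: he => [h1 _]; move/I000P: he' => [h1' _].
  have := h1 1 ltac:(lia); have := h1' 1 ltac:(lia); lia.
move: hP; rewrite !PhiS // => hP.
have [eP ew] := @step_inj k.+1 _ _ _ _ ltac:(lia) (@into _ he k ltac:(lia))
  (@into _ he' k ltac:(lia)) (@w_valid _ k.+1 he ltac:(lia))
  (@w_valid _ k.+1 he' ltac:(lia)) hP.
have IH' := IH ltac:(lia) eP.
case: (ltnP j k.+1) => hj2; first by apply: IH'; lia.
have -> : j = k.+1 by lia.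
apply: w_det => //; apply: IH'; lia.
Qed.

Lemma extend e k x : e \in I000 n -> 0 < k -> k.+1 <= n ->
  valid k.+1 (Phi k e) x ->
  exists e' : n.-tuple 'I_n,
    [/\ e' \in I000 n, (forall j, 0 < j <= k -> ev e' j = ev e j) & w e' k.+1 = x].
Proof.
move=> he k0 kn vx.
have [hb hn3] := (I000P e).1 he.
have hek : ev e k < k by apply: hb; lia.
have [v vdef] : {v : nat | v = match x with None => ev e k
    | Some a => if ev e k < a then a else a.-1 end} by eexists.
have hv : v < k.+1.
  move: vdef; case: x vx => [a|] /= va ->; last lia.
  case: (ltnP (ev e k) a) => h; lia.
have hvk : x <> None -> v <> ev e k.
  move: vdef; case: x vx => [a|] //= va -> _.
  case: (ltnP (ev e k) a) => h; lia.
pose f j := if j <= k then ev e j else if j == k.+1 then v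
            else if odd (j - k) then nat_of_bool (v != 0) else nat_of_bool (v == 0).
have fk : forall j, j <= k -> f j = ev e j by move=> j hj; rewrite /f hj.
have fk1 : f k.+1 = v by rewrite /f ltnn eqxx.
have ftail : forall j, k.+1 < j -> f j = if odd (j - k) then nat_of_bool (v != 0) else nat_of_bool (v == 0).
  move=> j hj; rewrite /f ifN; last lia.
  by rewrite ifN //; apply/eqP; lia.
have tail_neq : forall i, k.+1 <= i -> f i.+1 <> f i.
  move=> i hi.
  case: (eqVneq i k.+1) => [->|ne].
    rewrite fk1 ftail // subSn // subSn // subnn /=.
    case: (eqVneq v 0) => [->|h] // E; by rewrite -E in h.
  rewrite !ftail; [|lia|lia].
  rewrite subSn; last lia.
  rewrite oddS; case: (odd (i - k)); case: (v == 0) => //.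
have fb : forall j, 0 < j <= n -> f j < j.
  move=> j hj.
  case: (leqP j k) => hjk; first by rewrite fk //; apply: hb; lia.
  case: (eqVneq j k.+1) => [->|ne]; first by rewrite fk1.
  rewrite ftail; last lia.
  by case: odd; case: eqP => _ /=; lia.
have fn : forall j, 0 < j -> j.+2 <= n -> ~ (f j = f j.+1 /\ f j.+1 = f j.+2).
  move=> j j0 jn [E1 E2].
  case: (leqP j.+2 k) => h1.
    rewrite !fk in E1 E2; try lia.
    exact: (hn3 j).
  case: (eqVneq j.+1 k) => [ejk|ne].
    rewrite ejk fk1 in E2. rewrite fk in E2; last lia. rewrite ejk in E1. rewrite fk in E1; last lia. rewrite fk in E1; last lia.
    move: vdef hvk; case: x vx {hv} => [a|] va vd hvk.
      have h := hvk ltac:(discriminate).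
      by apply: h; rewrite -E2.
    move: va; rewrite /Phi /= wE; last lia.
    have -> : k.-1 = j by lia.
    by rewrite E1 eqxx.
  by apply: (tail_neq j.+1); [lia|].
have [hI hev] := mk_I000 fb fn.
exists (mk f); split => //.
  by move=> j hj; rewrite hev ?fk //; lia.
rewrite wE // hev // hev; [|lia]; rewrite fk1 fk // /=.
move: vdef hvk; case: x vx {fb fn hev} => [a|] va -> hvk /=; last by rewrite eqxx.
case: (ltnP (ev e k) a) => h.
  rewrite ifN; last by apply/eqP; move: va; rewrite /valid; lia.
  by rewrite h.
rewrite ifN; last by apply/eqP; move: va; rewrite /valid; lia.
rewrite ifN; last by move: va; rewrite /valid; lia.
congr Some; move: va; rewrite /valid; lia.
Qed.

Definition alt (j : nat) : nat := ~~ odd j.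

Lemma alt_I000 : mk alt \in I000 n /\ forall j, 0 < j <= n -> ev (mk alt) j = alt j.
Proof.
apply: mk_I000.
  move=> j hj; rewrite /alt; case: (eqVneq j 1) => [->//|ne].
  case: odd => /=; lia.
move=> j _ _ [E1 _]; move: E1; rewrite /alt oddS; by case: odd.
Qed.

Lemma surj k : 0 < k <= n -> forall p, st k p -> exists e, e \in I000 n /\ Phi k e = p.
Proof.
elim: k => [|k IH] hk p hp //.
case: (posnP k) => [k0|k0].
  subst k; case: p hp => [[] s] [hf [i [i1 i2]]]; try (exfalso; lia).
  have -> : s = 1%g.
    apply: sv_eq => j hj; rewrite sv1.
    case: (posnP j) => [->|j0]; first by have <- : i = 0 by lia.
    by apply: hf.
  by exists (mk alt); split; [exact: alt_I000.1|].
have [p' [x [hs hv ep]]] := @step_surj k.+1 p ltac:(lia) hp.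
rewrite /= in hs.
have [e [he eP]] := IH ltac:(lia) p' hs.
rewrite -eP in hv.
have [e' [he' hee' hw]] := extend he k0 ltac:(lia) hv.
exists e'; split => //.
rewrite PhiS // hw ep (Phi_loc hee') eP //.
Qed.

Lemma st_Dbar p : st n p <-> p \in Dbar_union n.
Proof.
case: p => [[] s]; rewrite inE /st /fixes_from /hasfp /=.
- split.
    case=> _ [i [i1 i2]]; apply/existsP; exists (Ordinal i1).
    by apply/eqP/val_inj; rewrite /= -sv_ord.
  move/existsP => [i /eqP hi]; split; first by move=> j hj; apply: sv_out.
  by exists i; split => //; rewrite sv_ord hi.
- split.
    case=> [hf [i [i1 i2]]]; apply/andP; split.
      apply/forallP => j; apply/implyP => hj; apply/eqP/val_inj.
      by rewrite /= -sv_ord hf.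
    have i1' : i < n by lia.
    apply/existsP; exists (Ordinal i1'); rewrite /= i1 /=.
    by apply/eqP/val_inj; rewrite /= -sv_ord.
  move/andP => [/forallP hf /existsP [i /andP[i1 /eqP i2]]]; split.
    move=> j hj; case: (ltnP j n) => jn; last exact: sv_out.
    have := hf (Ordinal jn); rewrite /= hj /= => /eqP h.
    by rewrite -[j]/(val (Ordinal jn)) sv_ord h.
  by exists i; split => //; rewrite sv_ord i2.
Qed.

End Proof.
Lemma card_perms m : #|{perm 'I_m}| = m`!.
Proof. exact: card_Sn. Qed.

Lemma card_fix m : #|[set s : {perm 'I_m} | [exists i, s i == i]]| = m`! - d m.
Proof.
rewrite cardsCs card_perms /d; congr (_ - _); apply: eq_card => s.
by rewrite !inE negb_exists.
Qed.

Lemma card_B m :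
  #|[set s : {perm 'I_m.+1} | [forall i : 'I_m.+1, (m <= i) ==> (s i == i)] &&
       [exists i : 'I_m.+1, (i < m) && (s i == i)]]| = m`! - d m.
Proof.
pose L := @lift_perm m ord_max ord_max.
have Linj : injective L.
  move=> s t e; apply/permP => k.
  have := congr1 (fun u : {perm 'I_m.+1} => u (lift ord_max k)) e.
  by rewrite /= /L !lift_perm_lift => /lift_inj.
pose Fx := [set s : {perm 'I_m.+1} | s ord_max == ord_max].
have FL : Fx = L @: setT.
  apply/eqP; rewrite eq_sym eqEcard; apply/andP; split.
    apply/subsetP => u /imsetP [s _ ->]; by rewrite inE /L lift_perm_id.
  rewrite card_imset // cardsT card_perms.
  have -> : Fx = [set s | perm_on [set~ ord_max] s].
    apply/setP => s; rewrite !inE; apply/eqP/idP.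
      move=> h; apply/subsetP => x; rewrite !inE; apply: contra => /eqP ->.
      by rewrite h.
    move=> h; apply/eqP; apply: contraT => hne.
    by have := subsetP h ord_max; rewrite !inE hne eqxx => /(_ isT).
  by rewrite cardsE card_perm cardsC1 card_ord.
rewrite (_ : [set s | _] = L @: [set s : {perm 'I_m} | [exists i, s i == i]]).
  by rewrite card_imset // card_fix.
apply/setP => u; apply/idP/idP.
  rewrite inE => /andP[/forallP hf /existsP[i /andP[i1 /eqP i2]]].
  have : u \in Fx by rewrite inE; apply: implyP (hf ord_max) _; rewrite /= leqnn.
  rewrite FL => /imsetP [s _ us]; apply/imsetP; exists s => //.
  rewrite inE; apply/existsP.
  have ii : i = lift ord_max (Ordinal i1).
    by apply: val_inj; rewrite /= /bump leqNgt i1.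
  exists (Ordinal i1); apply/eqP; apply: (@lift_inj _ ord_max).
  by rewrite -/L -(lift_perm_lift ord_max ord_max s) -/L -us -ii i2.
move/imsetP => [s]; rewrite inE => /existsP [k /eqP hk] ->.
rewrite inE; apply/andP; split.
  apply/forallP => i; apply/implyP => hi.
  have -> : i = ord_max by apply: val_inj; have := ltn_ord i; rewrite /=; lia.
  by rewrite /L lift_perm_id.
apply/existsP; exists (lift ord_max k); rewrite /L lift_perm_lift hk eqxx andbT.
have := ltn_ord k; rewrite /= /bump; case: leqP => /= h1 h2; lia.
Qed.

Lemma card_Dbar n : 0 < n -> #|Dbar_union n| = (n`! - d n) + (n.-1`! - d n.-1).
Proof.
case: n => [//|m] _ /=.
rewrite (_ : Dbar_union m.+1 =
   [set (true, s) | s in [set s : {perm 'I_m.+1} | [exists i, s i == i]]] :|: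
   [set (false, s) | s in [set s : {perm 'I_m.+1} |
       [forall i : 'I_m.+1, (m <= i) ==> (s i == i)] &&
       [exists i : 'I_m.+1, (i < m) && (s i == i)]]]).
  rewrite cardsU !card_imset; try by move=> x y [].
  rewrite card_fix card_B.
  rewrite (_ : _ :&: _ = set0) ?cards0 ?subn0 //.
  apply/setP => p; rewrite !inE.
  apply/negP => /andP[/imsetP [x _ ->] /imsetP [y _ [] //]].
have E : forall (b c : bool) (X : {set {perm 'I_m.+1}}) s,
    ((b, s) \in [set (c, s0) | s0 in X]) = (b == c) && (s \in X).
  move=> b c X s0; apply/imsetP/andP => [[x hx [-> ->]]|[/eqP -> hx]].
    by rewrite eqxx.
  by exists s0.
apply/setP => [[b s]]; rewrite inE in_setU !E.
by case: b; rewrite /= !inE ?orbF.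
Qed.

Unset Implicit Arguments.

Theorem mainTheorem1 (n : nat) (hn : 0 < n) :
  [/\ {in I000 n, forall e, phi e \in Dbar_union n},
      {in I000 n &, injective (@phi n)},
      {in Dbar_union n, forall p, exists2 e, e \in I000 n & phi e = p}
    & #|I000 n| = (n`! - d n) + (n.-1`! - d n.-1)].
Proof.
have hnn : 0 < n <= n by rewrite hn leqnn.
have hPhi : forall e : n.-tuple 'I_n, phi e = Phi n e by [].
have hinto : {in I000 n, forall e, phi e \in Dbar_union n}.
  move=> e he; apply/(st_Dbar hn); rewrite hPhi; apply: (into hn he).
  by rewrite hn leqnn.
have hinj : {in I000 n &, injective (@phi n)}.
  move=> e e' he he'; rewrite !hPhi => h.
  apply: (tuple_ext hn) => j hj.
  by apply: (inj_ev hn he he' hnn h).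
have hsurj : {in Dbar_union n, forall p, exists2 e, e \in I000 n & phi e = p}.
  move=> p /(st_Dbar hn) hp.
  have [e [he ep]] := surj hn hnn hp.
  by exists e.
split => //.
have E : [set phi x | x in I000 n] = Dbar_union n.
  apply/setP => p; apply/imsetP/idP => [[e he ->]|hp]; first exact: hinto.
  have [e he ep] := hsurj p hp; by exists e.
by rewrite -(card_Dbar hn) -E (card_in_imset hinj).
Qed.
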